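(* Let $\alpha_1,c_1>0$ and let $\{\lambda_n\}_{n\in\mathbb{N}^*}$ be a sequence of positive real numbers with $\lambda_n/(c_1n^{-\alpha_1})\to1$ as $n\to\infty$. Then \[ \sup_{N\in\mathbb{N}^*}\left\{2^{-m/N}\left[\prod_{n=1}^N\lambda_n\right]^{1/N}\right\}=c_1\left(\frac{\alpha_1}{\ln 2}\right)^{\alpha_1}m^{-\alpha_1}+o_{m\to\infty}(m^{-\alpha_1}). \]
   Context: $\mathbb{N}^*$ denotes the positive integers, $\ln$ the natural logarithm; $f=o_{m\to\infty}(g)$ means $f(m)/g(m)\to0$. *)

(* Defs.v *)
From Stdlib Require Import Reals.
From Coquelicot Require Import Coquelicot.
Open Scope R_scope.

Fixpoint prod_1toN (lam : nat -> R) (N : nat) : R :=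
  match N with
  | O => 1
  | S k => prod_1toN lam k * lam (S k)
  end.

Definition term (lam : nat -> R) (m N : nat) : R :=
  Rpower 2 (- INR m / INR N) * Rpower (prod_1toN lam N) (1 / INR N).

Definition supN (lam : nat -> R) (m : nat) : Rbar :=
  Sup_seq (fun k => term lam m (S k)).

(* Main.v *)
Require Import Defs.
From Stdlib Require Import Reals Lra Lia Arith.
From Coquelicot Require Import Coquelicot.
Open Scope R_scope.

Lemma exp_le_mono x y : x <= y -> exp x <= exp y.
Proof. intros H; destruct (Rle_lt_or_eq_dec _ _ H) as [h|h].
  left; now apply exp_increasing. subst; lra. Qed.

Lemma ln_le_sub1 x : 0 < x -> ln x <= x - 1.
Proof. intros H. pose proof (exp_ineq1_le (ln x)). rewrite exp_ln in H0; lra. Qed.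

Lemma sup_bounds (u : nat -> R) (B : R) :
  (forall k, u k <= B) ->
  is_finite (Sup_seq (fun k => Finite (u k))) /\
  (forall k, u k <= real (Sup_seq (fun k => Finite (u k)))) /\
  real (Sup_seq (fun k => Finite (u k))) <= B.
Proof.
  intros HB. pose proof (Sup_seq_correct (fun k => Finite (u k))) as H.
  destruct (Sup_seq (fun k => Finite (u k))) as [s| |]; simpl in H.
  - split; [reflexivity|]. split.
    + intros k. simpl. destruct (Rle_or_lt (u k) s) as [h|h]; auto.
      destruct (H (mkposreal _ (proj2 (Rlt_0_minus _ _) h))) as [H1 _].
      specialize (H1 k). simpl in H1. lra.
    + simpl. destruct (Rle_or_lt s B) as [h|h]; auto.
      destruct (H (mkposreal _ (proj2 (Rlt_0_minus _ _) h))) as [_ [n Hn]].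
      simpl in Hn. specialize (HB n). lra.
  - destruct (H B) as [n Hn]. simpl in Hn. specialize (HB n). lra.
  - specialize (H (u O) O). simpl in H. lra.
Qed.

Fixpoint ssum (f : nat -> R) (N : nat) : R :=
  match N with O => 0 | S k => ssum f k + f (S k) end.

Lemma sum_f_ssum f k : sum_f_R0 (fun j => f (S j)) k = ssum f (S k).
Proof. induction k; simpl. lra. rewrite IHk. simpl. reflexivity. Qed.

Definition sln N := ssum (fun n => ln (INR n)) N.

Lemma sln_lo N : (1 <= N)%nat -> INR N * ln (INR N) - INR N + 1 <= sln N.
Proof.
  intros H. destruct N as [|k]; [lia|]. clear H. induction k.
  - unfold sln; simpl. rewrite ln_1. lra.
  - unfold sln in *.
    replace (ssum (fun n => ln (INR n)) (S (S k))) with (ssum (fun n => ln (INR n)) (S k) + ln (INR (S (S k)))) by reflexivity.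
    rewrite (S_INR (S k)).
    set (n := INR (S k)) in *.
    assert (hn : 1 <= n) by (unfold n; rewrite S_INR; pose proof (pos_INR k); lra).
    assert (h : ln ((n+1)/n) <= (n+1)/n - 1) by (apply ln_le_sub1; apply Rdiv_lt_0_compat; lra).
    rewrite ln_div in h by lra.
    replace ((n+1)/n - 1) with (/n) in h by (field; lra).
    assert (n * (ln (n+1) - ln n) <= 1).
    { apply Rmult_le_compat_l with (r := n) in h; [|lra]. rewrite Rinv_r in h; lra. }
    nra.
Qed.

Lemma sln_hi N : (1 <= N)%nat -> sln N <= (INR N + 1) * ln (INR N) - INR N + 1.
Proof.
  intros H. destruct N as [|k]; [lia|]. clear H. induction k.
  - unfold sln; simpl. rewrite ln_1. lra.
  - unfold sln in *.
    replace (ssum (fun n => ln (INR n)) (S (S k))) with (ssum (fun n => ln (INR n)) (S k) + ln (INR (S (S k)))) by reflexivity.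
    rewrite (S_INR (S k)).
    set (n := INR (S k)) in *.
    assert (hn : 1 <= n) by (unfold n; rewrite S_INR; pose proof (pos_INR k); lra).
    assert (h : ln (n/(n+1)) <= n/(n+1) - 1) by (apply ln_le_sub1; apply Rdiv_lt_0_compat; lra).
    rewrite ln_div in h by lra.
    replace (n/(n+1) - 1) with (-/(n+1)) in h by (field; lra).
    assert ((n+1) * (ln n - ln (n+1)) <= -1).
    { apply Rmult_le_compat_l with (r := n+1) in h; [|lra].
      replace ((n+1) * - / (n+1)) with (-1) in h by (field; lra). lra. }
    nra.
Qed.

Lemma lim_invN : is_lim_seq (fun N => / INR N) 0.
Proof.
  pose proof (is_lim_seq_inv _ _ is_lim_seq_INR) as H. simpl in H.
  apply H. discriminate.
Qed.

Lemma lim_lnN : is_lim_seq (fun N => ln (INR N) / INR N) 0.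
Proof.
  apply is_lim_seq_le_le_loc with (u := fun _ => 0) (w := fun N => 2 * sqrt (/ INR N)).
  - exists 1%nat. intros N HN. apply le_INR in HN. simpl in HN.
    set (n := INR N) in *.
    assert (hs : 0 < sqrt n) by (apply sqrt_lt_R0; lra).
    assert (hss : sqrt n * sqrt n = n) by (apply sqrt_sqrt; lra).
    assert (hl : 0 <= ln n) by (rewrite <- ln_1; apply ln_le; lra).
    split. apply Rdiv_le_0_compat; lra.
    rewrite sqrt_inv.
    assert (ln n = 2 * ln (sqrt n)) by (rewrite <- hss at 1; rewrite ln_mult by lra; ring).
    pose proof (ln_le_sub1 _ hs).
    rewrite H.
    replace (2 * / sqrt n) with ((2 * sqrt n) * / n) by (assert (hi : / n = / sqrt n * / sqrt n) by (rewrite <- Rinv_mult; now rewrite hss);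
          rewrite hi; field; lra).
    unfold Rdiv. apply Rmult_le_compat_r. left; apply Rinv_0_lt_compat; lra. lra.
  - apply is_lim_seq_const.
  - replace (Finite 0) with (Finite (2 * sqrt 0)).
    2:{ rewrite sqrt_0; f_equal; ring. }
    apply (is_lim_seq_scal_l _ 2 (Finite (sqrt 0))).
    apply is_lim_seq_continuous. apply continuity_pt_sqrt; lra.
    apply lim_invN.
Qed.

Lemma r_lim (a c : R) (lam : nat -> R) :
  0 < a -> 0 < c -> (forall n : nat, (1 <= n)%nat -> 0 < lam n) ->
  is_lim_seq (fun n => lam n / (c * Rpower (INR n) (- a))) 1 ->
  is_lim_seq (fun n => ln (lam n / (c * Rpower (INR n) (- a)))) 0.
Proof.
  intros ha hc hl hq.
  set (q := fun n => lam n / (c * Rpower (INR n) (- a))) in *.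
  apply is_lim_seq_le_le_loc with (u := fun n => 1 - / q n) (w := fun n => q n - 1).
  - exists 1%nat. intros n Hn.
    assert (hqn : 0 < q n).
    { unfold q. apply Rdiv_lt_0_compat. auto. apply Rmult_lt_0_compat; auto. unfold Rpower; apply exp_pos. }
    split.
    + pose proof (ln_le_sub1 _ (Rinv_0_lt_compat _ hqn)). rewrite ln_Rinv in H by lra. change (1 - / q n <= ln (q n)). lra.
    + change (ln (q n) <= q n - 1). apply ln_le_sub1; auto.
  - replace (Finite 0) with (Finite (1 - 1)) by (f_equal; ring).
    apply is_lim_seq_minus'. apply is_lim_seq_const.
    pose proof (is_lim_seq_inv _ _ hq) as H. simpl in H. rewrite Rinv_1 in H.
    apply H. injection; lra.
  - replace (Finite 0) with (Finite (1 - 1)) by (f_equal; ring).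
    apply is_lim_seq_minus'. auto. apply is_lim_seq_const.
Qed.

Lemma prod_pos lam : (forall n : nat, (1 <= n)%nat -> 0 < lam n) ->
  forall N, 0 < prod_1toN lam N /\ ln (prod_1toN lam N) = ssum (fun n => ln (lam n)) N.
Proof.
  intros hl N. induction N; simpl.
  - split. lra. apply ln_1.
  - destruct IHN as [h1 h2]. assert (0 < lam (S N)) by (apply hl; lia).
    split. nra. rewrite ln_mult by lra. rewrite h2. reflexivity.
Qed.

Definition G (a c : R) (lam : nat -> R) (N : nat) : R :=
  Rpower (prod_1toN lam N) (1 / INR N) * Rpower (INR N) a / (c * exp a).

Lemma G_exp (a c : R) (lam : nat -> R) :
  0 < a -> 0 < c -> (forall n : nat, (1 <= n)%nat -> 0 < lam n) ->
  forall N, (1 <= N)%nat ->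
  G a c lam N = exp (ssum (fun n => ln (lam n / (c * Rpower (INR n) (- a)))) N / INR N
                     + a * (ln (INR N) - sln N / INR N - 1)).
Proof.
  intros ha hc hl N HN.
  assert (hs : forall N, ssum (fun n => ln (lam n / (c * Rpower (INR n) (- a)))) N
     = ssum (fun n => ln (lam n)) N - INR N * ln c + a * sln N).
  { unfold sln. induction N0; cbn [ssum]. simpl INR. ring.
    rewrite IHN0. 
    assert (0 < lam (S N0)) by (apply hl; lia).
    assert (0 < INR (S N0)) by (apply lt_0_INR; lia).
    rewrite ln_div; auto. 2:{ apply Rmult_lt_0_compat; auto. unfold Rpower; apply exp_pos. }
    rewrite ln_mult; auto. 2:{ unfold Rpower; apply exp_pos. }
    unfold Rpower at 1. rewrite ln_exp. rewrite S_INR. ring. }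
  rewrite hs. destruct (prod_pos lam hl N) as [hp hpl].
  assert (hN : 0 < INR N) by (apply lt_0_INR; lia).
  unfold G, Rpower. rewrite hpl.
  rewrite <- (exp_ln c) at 1 by auto.
  rewrite <- exp_plus.
  replace (exp (1 / INR N * ssum (fun n : nat => ln (lam n)) N) * exp (a * ln (INR N)))
    with (exp (1 / INR N * ssum (fun n : nat => ln (lam n)) N + a * ln (INR N))) by (rewrite exp_plus; ring).
  rewrite <- exp_plus. unfold Rdiv at 1. rewrite <- exp_Ropp, <- exp_plus. f_equal.
  field. lra.
Qed.

Lemma G_lim (a c : R) (lam : nat -> R) :
  0 < a -> 0 < c -> (forall n : nat, (1 <= n)%nat -> 0 < lam n) ->
  is_lim_seq (fun n => lam n / (c * Rpower (INR n) (- a))) 1 ->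
  is_lim_seq (G a c lam) 1.
Proof.
  intros ha hc hl hq.
  pose proof (r_lim a c lam ha hc hl hq) as hr.
  set (r := fun n => ln (lam n / (c * Rpower (INR n) (- a)))) in *.
  assert (h1 : is_lim_seq (fun N => ssum r N / INR N) 0).
  {
    apply is_lim_seq_incr_1 in hr. apply is_lim_seq_Reals in hr.
    pose proof (Cesaro_1 _ _ hr) as hc1. apply is_lim_seq_Reals in hc1.
    apply is_lim_seq_ext_loc with (2 := hc1).
    exists 1%nat. intros n Hn. destruct n as [|k]; [lia|]. simpl Init.Nat.pred.
    rewrite sum_f_ssum. reflexivity. }
  assert (h2 : is_lim_seq (fun N => ln (INR N) - sln N / INR N - 1) 0).
  { apply is_lim_seq_le_le_loc with (u := fun N => - (ln (INR N) / INR N + / INR N)) (w := fun _ => 0).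
    - exists 1%nat. intros N HN. pose proof (sln_lo N HN). pose proof (sln_hi N HN).
      assert (hN : 1 <= INR N) by (apply le_INR in HN; exact HN).
      split.
      + apply Rmult_le_reg_r with (r := INR N); [lra|].
        replace ((- (ln (INR N) / INR N + / INR N)) * INR N) with (- ln (INR N) - 1) by (field; lra).
        replace ((ln (INR N) - sln N / INR N - 1) * INR N) with (INR N * ln (INR N) - sln N - INR N) by (field; lra).
        nra.
      + assert (sln N / INR N >= ln (INR N) - 1 + / INR N).
        { apply Rle_ge. apply Rmult_le_reg_r with (r := INR N); [lra|].
          replace (sln N / INR N * INR N) with (sln N) by (field; lra).
          replace ((ln (INR N) - 1 + / INR N) * INR N) with (INR N * ln (INR N) - INR N + 1) by (field; lra).
          lra. }
        assert (0 < / INR N) by (apply Rinv_0_lt_compat; lra). lra.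
    - replace (Finite 0) with (Finite (- (0 + 0))) by (f_equal; ring).
      apply (proj1 (is_lim_seq_opp _ (Finite (0+0)))). apply is_lim_seq_plus'. apply lim_lnN. apply lim_invN.
    - apply is_lim_seq_const. }
  assert (h3 : is_lim_seq (fun N => ssum r N / INR N + a * (ln (INR N) - sln N / INR N - 1)) 0).
  { replace (Finite 0) with (Finite (0 + a * 0)) by (f_equal; ring).
    apply is_lim_seq_plus'. auto. apply (is_lim_seq_scal_l _ a (Finite 0)). auto. }
  apply is_lim_seq_ext_loc with (u := fun N => exp (ssum r N / INR N + a * (ln (INR N) - sln N / INR N - 1))).
  - exists 1%nat. intros N HN. symmetry. apply G_exp; auto.
  - replace (Finite 1) with (Finite (exp 0)) by (rewrite exp_0; reflexivity).
    apply is_lim_seq_continuous. apply derivable_continuous_pt, derivable_pt_exp. auto.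
Qed.

Definition F (a mu y : R) := exp a * Rpower 2 (- mu / y) * Rpower y (- a).

Lemma ln2_pos : 0 < ln 2.
Proof. rewrite <- ln_1. apply ln_increasing; lra. Qed.

Lemma F_exp a mu y : F a mu y = exp (a - mu * ln 2 / y - a * ln y).
Proof. unfold F, Rpower. rewrite <- !exp_plus. f_equal. unfold Rdiv. ring. Qed.

Lemma F_pos a mu y : 0 < F a mu y.
Proof. rewrite F_exp. apply exp_pos. Qed.

Lemma Fmax a mu y : 0 < a -> 0 < mu -> 0 < y -> F a mu y <= Rpower (mu * ln 2 / a) (- a).
Proof.
  intros ha hm hy. pose proof ln2_pos as hL.
  rewrite F_exp. unfold Rpower. apply exp_le_mono.
  set (u := mu * ln 2 / (a * y)).
  assert (hu : 0 < u) by (unfold u; apply Rdiv_lt_0_compat; nra).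
  replace (mu * ln 2 / a) with (u * y) by (unfold u; field; lra).
  rewrite ln_mult by lra.
  pose proof (ln_le_sub1 _ hu).
  replace (mu * ln 2 / y) with (a * u) by (unfold u; field; lra).
  pose proof (Rmult_le_compat_l a _ _ (Rlt_le _ _ ha) H). lra.
Qed.

Lemma Flow a mu y : 0 < a -> 0 < mu -> mu * ln 2 / a <= y ->
  Rpower (mu * ln 2 / a) (- a) * Rpower ((mu * ln 2 / a) / y) a <= F a mu y.
Proof.
  intros ha hm hy. pose proof ln2_pos as hL.
  assert (hx : 0 < mu * ln 2 / a) by (apply Rdiv_lt_0_compat; nra).
  rewrite F_exp. unfold Rpower. rewrite <- exp_plus. apply exp_le_mono.
  rewrite (ln_div (mu * ln 2 / a) y) by lra.
  assert (mu * ln 2 / y <= a).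
  { apply Rmult_le_reg_r with (r := y); [lra|]. replace (mu * ln 2 / y * y) with (mu * ln 2) by (field; lra).
    apply Rmult_le_compat_r with (r := a) in hy; [|lra].
    replace (mu * ln 2 / a * a) with (mu * ln 2) in hy by (field; lra). lra. }
  lra.
Qed.

Lemma F_split a mu y : F a mu y = Rpower 2 (- (mu / 2) / y) * F a (mu / 2) y.
Proof.
  unfold F. replace (- mu / y) with (- (mu / 2) / y + - (mu / 2) / y) by (unfold Rdiv; rewrite <- Rmult_plus_distr_r; f_equal; field).
  rewrite Rpower_plus. ring.
Qed.

Lemma Rpow_half a x : 0 < x -> Rpower (x / 2) (- a) = Rpower 2 a * Rpower x (- a).
Proof.
  intros hx. unfold Rpower. rewrite <- exp_plus. f_equal. rewrite ln_div by lra. ring.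
Qed.

Lemma term_dec a c lam m N : 0 < c -> (1 <= N)%nat ->
  term lam m N = c * G a c lam N * F a (INR m) (INR N).
Proof.
  intros hc HN. assert (hN : 0 < INR N) by (apply lt_0_INR; lia).
  unfold term, G, F.
  assert (Rpower (INR N) a * Rpower (INR N) (- a) = 1).
  { rewrite <- Rpower_plus. replace (a + - a) with 0 by ring. apply Rpower_O; auto. }
  assert (0 < exp a) by apply exp_pos.
  field_simplify; [| lra].
  rewrite Rmult_assoc, H. ring.
Qed.

Lemma finite_bound (u : nat -> R) (N0 : nat) :
  exists H, 0 <= H /\ forall N, (N < N0)%nat -> u N <= H.
Proof.
  induction N0.
  - exists 0. split. lra. intros; lia.
  - destruct IHN0 as [H [h0 h1]]. exists (Rmax H (u N0)). split.
    + apply Rle_trans with H; auto. apply Rmax_l.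
    + intros N HN. destruct (Nat.eq_dec N N0) as [->|ne]. apply Rmax_r.
      apply Rle_trans with H. apply h1; lia. apply Rmax_l.
Qed.

Lemma G_pos a c lam N : 0 < c -> 0 < G a c lam N.
Proof.
  intros hc. unfold G, Rpower. apply Rdiv_lt_0_compat.
  apply Rmult_lt_0_compat; apply exp_pos. apply Rmult_lt_0_compat; auto. apply exp_pos.
Qed.

Lemma prod_le3 c g g' f f' : 0 <= c -> 0 <= g <= g' -> 0 <= f <= f' -> c * g * f <= c * g' * f'.
Proof.
  intros. apply Rmult_le_compat; try lra.
  apply Rmult_le_pos; lra. apply Rmult_le_compat_l; lra.
Qed.

Lemma exp_neg_le w : 0 < w -> exp (- w) <= / w.
Proof.
  intros hw. pose proof (exp_ineq1_le w). pose proof (exp_pos w).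
  rewrite exp_Ropp. apply Rinv_le_contravar; lra.
Qed.

Lemma core (a c : R) (lam : nat -> R) (eps : R) :
  0 < a -> 0 < c -> (forall n : nat, (1 <= n)%nat -> 0 < lam n) ->
  is_lim_seq (fun n => lam n / (c * Rpower (INR n) (- a))) 1 ->
  0 < eps <= 1/2 ->
  exists M0, forall m, (M0 <= m)%nat ->
    (forall N, (1 <= N)%nat -> term lam m N <= (1 + eps) * (c * Rpower (INR m * ln 2 / a) (- a))) /\
    (exists N, (1 <= N)%nat /\ (1 - eps) * (c * Rpower (INR m * ln 2 / a) (- a)) <= term lam m N).
Proof.
  intros ha hc hl hq he.
  pose proof ln2_pos as hL.
  pose proof (G_lim a c lam ha hc hl hq) as hG.
  apply is_lim_seq_spec in hG.
  assert (hd : 0 < eps / 2) by lra.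
  destruct (hG (mkposreal _ hd)) as [N0 hN0]. simpl in hN0.
  set (N1 := Nat.max N0 1).
  assert (hN1 : (N0 <= N1)%nat /\ (1 <= N1)%nat) by (unfold N1; lia).
  destruct (finite_bound (G a c lam) N0) as [H [hH0 hH]].
  set (T1 := INR N1 * a / ln 2).
  set (T2 := a * a / (eps / 2 * ln 2)).
  set (T3 := 2 * INR N1 * H * Rpower 2 a / ln 2).
  set (R0 := Rmax (Rmax T1 T2) (Rmax T3 1)).
  assert (hR0 : 1 <= R0 /\ T1 <= R0 /\ T2 <= R0 /\ T3 <= R0).
  { unfold R0. repeat split.
    - eapply Rle_trans; [|apply Rmax_r]. apply Rmax_r.
    - eapply Rle_trans; [|apply Rmax_l]. apply Rmax_l.
    - eapply Rle_trans; [|apply Rmax_l]. apply Rmax_r.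
    - eapply Rle_trans; [|apply Rmax_r]. apply Rmax_l. }
  destruct (nfloor_ex R0 ltac:(lra)) as [n0 hn0].
  exists (S n0). intros m hm.
  apply le_INR in hm. rewrite S_INR in hm.
  set (mu := INR m) in *.
  assert (hmu : 1 <= mu /\ T1 <= mu /\ T2 <= mu /\ T3 <= mu) by lra.
  set (x := mu * ln 2 / a).
  assert (hx : 0 < x) by (unfold x; apply Rdiv_lt_0_compat; nra).
  set (Xp := Rpower x (- a)).
  assert (hXp : 0 < Xp) by (unfold Xp, Rpower; apply exp_pos).
  assert (hxN1 : INR N1 <= x).
  { replace x with (INR N1 + (mu - T1) * (ln 2 / a)) by (unfold x, T1; field; lra).
    assert (0 <= (mu - T1) * (ln 2 / a)). { apply Rmult_le_pos. lra. left; apply Rdiv_lt_0_compat; lra. }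
    lra. }
  assert (hxd : a / (eps / 2) <= x).
  { replace x with (a / (eps / 2) + (mu - T2) * (ln 2 / a)) by (unfold x, T2; field; lra).
    assert (0 <= (mu - T2) * (ln 2 / a)). { apply Rmult_le_pos. lra. left; apply Rdiv_lt_0_compat; lra. }
    lra. }
  split.
  - intros N HN.
    assert (hNr : 1 <= INR N) by (apply le_INR in HN; exact HN).
    rewrite (term_dec a c lam m N hc HN). fold mu.
    pose proof (G_pos a c lam N hc) as hGp.
    pose proof (F_pos a mu (INR N)) as hFp.
    destruct (le_lt_dec N0 N) as [hge|hlt].
    + specialize (hN0 N hge). apply Rabs_lt_between' in hN0.
      pose proof (Fmax a mu (INR N) ha ltac:(lra) ltac:(lra)) as hF. fold x Xp in hF.
      replace ((1 + eps) * (c * Xp)) with (c * (1 + eps) * Xp) by ring.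
      apply prod_le3; lra.
    + pose proof (hH N hlt) as hGH.
      rewrite F_split.
      assert (hmu2 : 0 < mu / 2) by lra.
      pose proof (Fmax a (mu / 2) (INR N) ha hmu2 ltac:(lra)) as hF.
      replace (mu / 2 * ln 2 / a) with (x / 2) in hF by (unfold x; field; lra).
      rewrite Rpow_half in hF by lra. fold Xp in hF.
      set (w := mu * ln 2 / (2 * INR N)).
      assert (hw : 0 < w) by (unfold w; apply Rdiv_lt_0_compat; nra).
      assert (h2 : Rpower 2 (- (mu / 2) / INR N) <= 2 * INR N1 / (mu * ln 2)).
      { unfold Rpower. replace (- (mu / 2) / INR N * ln 2) with (- w) by (unfold w; field; lra).
        eapply Rle_trans. apply exp_neg_le; auto.
        unfold w. rewrite Rinv_div.
        assert (INR N <= INR N1) by (apply le_INR; lia).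
        unfold Rdiv. apply Rmult_le_compat_r. left; apply Rinv_0_lt_compat; nra. lra. }
      assert (hP : 0 < Rpower 2 (- (mu / 2) / INR N)) by (unfold Rpower; apply exp_pos).
      pose proof (F_pos a (mu / 2) (INR N)) as hF2.
      assert (h2a : 0 < Rpower 2 a) by (unfold Rpower; apply exp_pos).
      assert (hk : H * (2 * INR N1 / (mu * ln 2)) * Rpower 2 a <= 1).
      { replace (H * (2 * INR N1 / (mu * ln 2)) * Rpower 2 a) with (T3 / mu) by (unfold T3; field; lra).
        apply Rmult_le_reg_r with (r := mu); [lra|]. replace (T3 / mu * mu) with T3 by (field; lra). lra. }
      assert (hb : G a c lam N * (Rpower 2 (- (mu / 2) / INR N) * F a (mu / 2) (INR N))
                   <= H * (2 * INR N1 / (mu * ln 2)) * (Rpower 2 a * Xp)).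
      { rewrite <- Rmult_assoc. apply Rmult_le_compat; try lra.
        apply Rmult_le_pos; lra. apply Rmult_le_compat; lra. }
      assert (hb2 : H * (2 * INR N1 / (mu * ln 2)) * (Rpower 2 a * Xp) <= (1 + eps) * Xp).
      { replace (H * (2 * INR N1 / (mu * ln 2)) * (Rpower 2 a * Xp)) with
          ((H * (2 * INR N1 / (mu * ln 2)) * Rpower 2 a) * Xp) by ring.
        apply Rmult_le_compat_r; lra. }
      rewrite Rmult_assoc.
      replace ((1 + eps) * (c * Xp)) with (c * ((1 + eps) * Xp)) by ring.
      apply Rmult_le_compat_l; lra.
  - destruct (nfloor_ex x ltac:(lra)) as [n hn].
    exists (S n). split. lia.
    assert (hNr : INR (S n) = INR n + 1) by apply S_INR.
    set (y := INR (S n)) in *.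
    assert (hge : (N0 <= S n)%nat).
    { assert (INR N0 < y). { assert (INR N0 <= INR N1) by (apply le_INR; lia). lra. }
      apply INR_lt in H0. lia. }
    rewrite (term_dec a c lam m (S n) hc ltac:(lia)). fold mu y.
    specialize (hN0 (S n) hge). apply Rabs_lt_between' in hN0.
    pose proof (Flow a mu y ha ltac:(lra) ltac:(fold x; lra)) as hF. fold x Xp in hF.
    assert (hq1 : 1 - eps / 2 <= Rpower (x / y) a).
    { unfold Rpower. eapply Rle_trans; [|apply exp_ineq1_le].
      assert (hl1 : ln (y / x) <= y / x - 1) by (apply ln_le_sub1; apply Rdiv_lt_0_compat; lra).
      rewrite ln_div in hl1 by lra. rewrite ln_div by lra.
      assert (y / x - 1 <= / x).
      { replace (y / x - 1) with ((y - x) * / x) by (field; lra).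
        rewrite <- (Rmult_1_l (/ x)) at 2. apply Rmult_le_compat_r. left; apply Rinv_0_lt_compat; lra. lra. }
      assert (a * / x <= eps / 2).
      { apply Rmult_le_reg_r with (r := x); [lra|]. replace (a * / x * x) with a by (field; lra).
        apply Rmult_le_compat_l with (r := eps / 2) in hxd; [|lra].
        replace (eps / 2 * (a / (eps / 2))) with a in hxd by (field; lra). lra. }
      assert (a * (ln y - ln x) <= a * / x) by (apply Rmult_le_compat_l; lra).
      lra. }
    pose proof (G_pos a c lam (S n) hc).
    assert (hF2 : Xp * (1 - eps / 2) <= F a mu y).
    { eapply Rle_trans; [|exact hF]. apply Rmult_le_compat_l; lra. }
    replace ((1 - eps) * (c * Xp)) with (c * (1 - eps) * Xp) by ring.
    assert (c * (1 - eps) * Xp <= c * (1 - eps / 2) * (Xp * (1 - eps / 2))).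
    { replace (c * (1 - eps / 2) * (Xp * (1 - eps / 2))) with (c * Xp * ((1 - eps/2) * (1 - eps/2))) by ring.
      replace (c * (1 - eps) * Xp) with (c * Xp * (1 - eps)) by ring.
      apply Rmult_le_compat_l. apply Rmult_le_pos; lra. nra. }
    eapply Rle_trans; [exact H1|].
    apply prod_le3; try lra. split; [apply Rmult_le_pos; lra| auto].
Qed.

Lemma Xp_eq a mu : 0 < a -> 0 < mu ->
  Rpower (mu * ln 2 / a) (- a) = Rpower (a / ln 2) a * Rpower mu (- a).
Proof.
  intros ha hm. pose proof ln2_pos. unfold Rpower. rewrite <- exp_plus. f_equal.
  rewrite !ln_div by nra. rewrite ln_mult by lra. ring.
Qed.

Lemma G_bounded a c lam :
  0 < a -> 0 < c -> (forall n : nat, (1 <= n)%nat -> 0 < lam n) ->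
  is_lim_seq (fun n => lam n / (c * Rpower (INR n) (- a))) 1 ->
  exists Hb, forall N, G a c lam N <= Hb.
Proof.
  intros ha hc hl hq.
  pose proof (G_lim a c lam ha hc hl hq) as hG. apply is_lim_seq_spec in hG.
  destruct (hG (mkposreal 1 Rlt_0_1)) as [N0 hN0]. simpl in hN0.
  destruct (finite_bound (G a c lam) N0) as [H [_ hH]].
  exists (Rmax H 2). intros N. destruct (le_lt_dec N0 N) as [h|h].
  - specialize (hN0 N h). apply Rabs_lt_between' in hN0.
    eapply Rle_trans; [|apply Rmax_r]. lra.
  - eapply Rle_trans; [|apply Rmax_l]. auto.
Qed.

Theorem lemma4 (a1 c1 : R) (lam : nat -> R) :
  0 < a1 -> 0 < c1 ->
  (forall n : nat, (1 <= n)%nat -> 0 < lam n) ->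
  is_lim_seq (fun n => lam n / (c1 * Rpower (INR n) (- a1))) 1 ->
  (forall m : nat, is_finite (supN lam m)) /\
  is_lim_seq
    (fun m => (real (supN lam m)
               - c1 * Rpower (a1 / ln 2) a1 * Rpower (INR m) (- a1))
              / Rpower (INR m) (- a1)) 0.
Proof.
  intros ha hc hl hq. pose proof ln2_pos as hL.
  split.
  - intros m. destruct (G_bounded a1 c1 lam ha hc hl hq) as [Hb hb].
    unfold supN.
    apply (sup_bounds (fun k => term lam m (S k)) (c1 * Hb * exp a1)).
    intros k. rewrite (term_dec a1 c1 lam m (S k) hc ltac:(lia)).
    apply prod_le3. lra. split. left; apply G_pos; auto. auto.
    split. left; apply F_pos. rewrite F_exp. apply exp_le_mono.
    assert (h1 : 1 <= INR (S k)) by (rewrite S_INR; pose proof (pos_INR k); lra).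
    assert (0 <= ln (INR (S k))) by (rewrite <- ln_1; apply ln_le; lra).
    assert (0 <= INR m * ln 2 / INR (S k)).
    { apply Rmult_le_pos. apply Rmult_le_pos. apply pos_INR. lra. left; apply Rinv_0_lt_compat; lra. }
    nra.
  - apply is_lim_seq_spec. intros eps.
    set (K := c1 * Rpower (a1 / ln 2) a1).
    assert (hK : 0 < K) by (unfold K, Rpower; apply Rmult_lt_0_compat; auto; apply exp_pos).
    set (e := Rmin (eps / (2 * K)) (1 / 2)).
    assert (he : 0 < e <= 1/2 /\ e <= eps / (2 * K)).
    { unfold e. pose proof (cond_pos eps). repeat split.
      apply Rmin_glb_lt. apply Rdiv_lt_0_compat; lra. lra. apply Rmin_r. apply Rmin_l. }
    destruct (core a1 c1 lam e ha hc hl hq ltac:(lra)) as [M0 hM0].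
    exists (Nat.max M0 1). intros m hm.
    pose proof (Nat.le_max_l M0 1). pose proof (Nat.le_max_r M0 1).
    assert (hm0 : (M0 <= m)%nat) by lia. assert (hm1 : (1 <= m)%nat) by lia.
    destruct (hM0 m hm0) as [hup [N [hN hlow]]].
    assert (hmr : 0 < INR m) by (apply lt_0_INR; lia).
    rewrite (Xp_eq a1 (INR m) ha hmr) in hup, hlow.
    set (p := Rpower (INR m) (- a1)) in *.
    assert (hp : 0 < p) by (unfold p, Rpower; apply exp_pos).
    fold K in hup, hlow. unfold supN.
    destruct (sup_bounds (fun k => term lam m (S k)) ((1 + e) * (c1 * Rpower (a1 / ln 2) a1 * p))) as [_ [hs1 hs2]].
    { intros k. eapply Rle_trans. apply hup. lia. right; ring. }
    set (Sm := real (Sup_seq (fun k => Finite (term lam m (S k))))) in *.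
    assert (hlo : (1 - e) * (K * p) <= Sm).
    { destruct N as [|k]; [lia|]. specialize (hs1 k). unfold K. eapply Rle_trans; [|exact hs1]. eapply Rle_trans; [|exact hlow]. right; ring. }
    fold K in hs2.
    replace ((Sm - K * p) / p - 0) with (Sm / p - K) by (field; lra).
    assert (e * K < eps).
    { assert (hek : e * K <= eps / (2 * K) * K) by (apply Rmult_le_compat_r; lra).
      replace (eps / (2 * K) * K) with (eps / 2) in hek by (field; lra).
      pose proof (cond_pos eps). lra. }
    assert (hS1 : Sm / p <= (1 + e) * K).
    { apply Rmult_le_reg_r with (r := p); auto. replace (Sm / p * p) with Sm by (field; lra). lra. }
    assert (hS2 : (1 - e) * K <= Sm / p).
    { apply Rmult_le_reg_r with (r := p); auto. replace (Sm / p * p) with Sm by (field; lra). lra. }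
    apply Rabs_lt_between'. split; nra.
Qed.
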